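(* If $0\le\alpha\eta\le1$, then \[ \rho^{\mathrm{dir}}_{\alpha,\eta}\le\sqrt{(1-\alpha\eta)^2-2\alpha(1-\alpha\eta)c_\Phi+\alpha^2L_\Phi^2}, \] and equivalently \[ \rho^{\mathrm{dir}}_{\alpha,\eta}\le\sqrt{1-2\alpha(c_\Phi+\eta)+\alpha^2(L_\Phi^2+2c_\Phi\eta+\eta^2)}. \] Consequently, if $0\le\alpha\eta\le1$, $c_\Phi+\eta>0$, and \[ 0<\alpha<\frac{2(c_\Phi+\eta)}{L_\Phi^2+2c_\Phi\eta+\eta^2}, \] then $\rho^{\mathrm{dir}}_{\alpha,\eta}<1$.
   Context: Consider a finite discounted MDP with state space $\mathcal S=\{1,\dots,|\mathcal S|\}$, action space $\mathcal A=\{1,\dots,|\mathcal A|\}$, transition probabilities $P(s'\mid s,a)$, and discount factor $\gamma\in(0,1)$. State-action vectors are ordered as $(1,1),(2,1),\dots,(|\mathcal S|,1),(1,2),\dots$. The matrix $P\in\mathbb R^{|\mathcal S||\mathcal A|\times|\mathcal S|}$ has rows $P(\cdot\mid s,a)$. The set $\Theta$ is the finite set of deterministic stationary policies $\pi:\mathcal S\to\mathcal A$. For $\pi\in\Theta$, $\Pi^\pi\in\mathbb R^{|\mathcal S|\times|\mathcal S||\mathcal A|}$ has entry $1$ at row $s$, column $(s,\pi(s))$, and zeros elsewhere. The feature matrix $\Phi\in\mathbb R^{|\mathcal S||\mathcal A|\times m}$ has full column rank. The distribution $d>0$ on $\mathcal S\times\mathcal A$ gives $D=\mathrm{diag}(d)$.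 The step size is $\alpha\in(0,1)$ and the regularization weight is $\eta\ge0$. Let $M_\pi:=\Phi^\top D\Phi-\gamma\Phi^\top DP\Pi^\pi\Phi$. Define \[ c_\Phi:=\min_{\pi\in\Theta}\lambda_{\min}\big((M_\pi+M_\pi^\top)/2\big),\qquad L_\Phi:=\max_{\pi\in\Theta}\|M_\pi\|_2. \] For $\pi\in\Theta$, define $A^\eta_\pi:=I-\alpha(M_\pi+\eta I)$, and let $\rho^{\mathrm{dir}}_{\alpha,\eta}$ be the joint spectral radius $\lim_k\max_{\pi_i\in\Theta}\|A^\eta_{\pi_k}\cdots A^\eta_{\pi_1}\|^{1/k}$ of $\{A^\eta_\pi:\pi\in\Theta\}$. *)

(* Defs.v *)
From HB Require Import structures.
From mathcomp Require Import all_boot all_order all_algebra.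
From mathcomp Require Import all_classical all_reals all_analysis.
Set Implicit Arguments. Unset Strict Implicit. Unset Printing Implicit Defensive.
Import Order.TTheory GRing.Theory Num.Theory.
Local Open Scope classical_set_scope.
Local Open Scope ring_scope.

Section Defs.
Variable R : realType.

(* Index of the state-action pair (s,a) in the ordering
   (1,1),(2,1),...,(|S|,1),(1,2),... : zero-based value s + |S| * a. *)
Lemma sa_index_lt (nS nA : nat) (s : 'I_nS) (a : 'I_nA) : (s + nS * a < nS * nA)%N.
Proof.
have Ha := ltn_ord a; have Hs := ltn_ord s.
apply: (@leq_trans (nS * a.+1)); last by rewrite leq_mul2l Ha orbT.
by rewrite mulnS ltn_add2r.
Qed.

Definition sa_index (nS nA : nat) (s : 'I_nS) (a : 'I_nA) : 'I_(nS * nA) :=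
  Ordinal (sa_index_lt s a).

Definition policy (nS nA : nat) := {ffun 'I_nS -> 'I_nA}.

Definition PiMat (nS nA : nat) (pi : policy nS nA) : 'M[R]_(nS, nS * nA) :=
  \matrix_(s < nS, j < nS * nA) (if j == sa_index s (pi s) then 1 else 0).

Definition vnorm2 (q : nat) (x : 'cV[R]_q) : R := Num.sqrt (\sum_i x i 0 ^+ 2).

Definition opnorm2 (p q : nat) (A : 'M[R]_(p, q)) : R :=
  sup [set vnorm2 (A *m x) | x in [set x : 'cV[R]_q | vnorm2 x = 1]].

(* smallest eigenvalue (used for symmetric matrices, whose eigenvalues are real) *)
Definition lambda_min (n : nat) (S : 'M[R]_n) : R := inf [set a : R | eigenvalue S a].

Definition Mpi (nS nA m : nat) (Phi : 'M[R]_(nS * nA, m)) (d : 'cV[R]_(nS * nA))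
  (P : 'M[R]_(nS * nA, nS)) (gamma : R) (pi : policy nS nA) : 'M[R]_m :=
  Phi^T *m diag_mx d^T *m Phi - gamma *: (Phi^T *m diag_mx d^T *m P *m PiMat pi *m Phi).

Definition c_Phi (nS nA m : nat) (Phi : 'M[R]_(nS * nA, m)) (d : 'cV[R]_(nS * nA))
  (P : 'M[R]_(nS * nA, nS)) (gamma : R) : R :=
  inf [set lambda_min (2^-1 *: (Mpi Phi d P gamma pi + (Mpi Phi d P gamma pi)^T))
      | pi in [set: policy nS nA]].

Definition L_Phi (nS nA m : nat) (Phi : 'M[R]_(nS * nA, m)) (d : 'cV[R]_(nS * nA))
  (P : 'M[R]_(nS * nA, nS)) (gamma : R) : R :=
  sup [set opnorm2 (Mpi Phi d P gamma pi) | pi in [set: policy nS nA]].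

Definition Aeta (nS nA m : nat) (Phi : 'M[R]_(nS * nA, m)) (d : 'cV[R]_(nS * nA))
  (P : 'M[R]_(nS * nA, nS)) (gamma : R) (alpha eta : R) (pi : policy nS nA) : 'M[R]_m :=
  1%:M - alpha *: (Mpi Phi d P gamma pi + eta%:M).

Definition prodA (m : nat) (T : Type) (A : T -> 'M[R]_m) (s : seq T) : 'M[R]_m :=
  foldl (fun B pi => A pi *m B) 1%:M s.

Definition jsr (m : nat) (T : finType) (A : T -> 'M[R]_m) : R :=
  limn (fun k : nat =>
    powR (sup [set opnorm2 (prodA A (fgraph f)) | f in [set: {ffun 'I_k -> T}]])
         (k%:R^-1)).

Definition rho_dir (nS nA m : nat) (Phi : 'M[R]_(nS * nA, m)) (d : 'cV[R]_(nS * nA))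
  (P : 'M[R]_(nS * nA, nS)) (gamma : R) (alpha eta : R) : R :=
  jsr (Aeta Phi d P gamma alpha eta).

End Defs.

(* Main.v *)
Require Import Defs.
From HB Require Import structures.
From mathcomp Require Import all_boot all_order all_algebra.
From mathcomp Require Import all_classical all_reals all_analysis.
From mathcomp Require Import ring lra.
From mathcomp Require Import complex.
Import Order.TTheory GRing.Theory Num.Theory.
Local Open Scope classical_set_scope.
Local Open Scope ring_scope.
Set Implicit Arguments. Unset Strict Implicit. Unset Printing Implicit Defensive.

Section Spec.
Local Open Scope sesquilinear_scope.
Variable R : rcfType.
Local Notation C := (R[i]).
Local Notation toC := (real_complex R).

Lemma toC_real (a : R) : toC a \is Num.real.
Proof. by rewrite /real_complex_def complex_real. Qed.

Lemma spectral_real m (S : 'M[R]_m) : S^T = S ->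
  exists d : 'I_m -> R,
   [/\ forall j, eigenvalue S (d j),
       forall a, eigenvalue S a -> exists j, a = d j &
       forall (l : R) (x : 'cV[R]_m), (forall j, l <= d j) ->
          l * (x^T *m x) 0 0 <= (x^T *m S *m x) 0 0].
Proof.
move=> Ssym.
set Sc := map_mx toC S.
have Sh : Sc \is hermsymmx.
  apply: realsym_hermsym.
    by apply/eqP; rewrite expr0 scale1r map_mx_id // /Sc map_trmx Ssym.
  by apply/mxOverP => i j; rewrite mxE toC_real.
set U := spectralmx Sc; set D := spectral_diag Sc.
have Uu : U \is unitarymx := spectral_unitarymx Sc.
have UU : U *m U^t* = 1%:M := unitarymxP Uu.
have UiU : invmx U = U^t* := invmx_unitary Uu.
have Uunit : U \in unitmx := unitarymx_unit Uu.
have UtU : U^t* *m U = 1%:M by rewrite -UiU mulVmx.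
have SE : Sc = U^t* *m diag_mx D *m U.
  by rewrite -UiU; apply/orthomx_spectralP/hermitian_normalmx.
have Dr : D \is a realmx := hermitian_spectral_diag_real Sh.
have DR j : D 0 j = toC (complex.Re (D 0 j)) by rewrite RRe_real // (mxOverP Dr).
exists (fun j => complex.Re (D 0 j)).
have eigC a : eigenvalue S a = eigenvalue Sc (toC a).
  by rewrite !eigenvalue_root_char /Sc -map_char_poly fmorph_root.
split.
- move=> j; rewrite eigC -DR; apply/eigenvalueP; exists (row j U).
    rewrite -row_mul SE !mulmxA UU mul1mx mul_diag_mx; apply/rowP => k.
    by rewrite !mxE.
  apply/eqP => h; have := congr1 (fun v => (v *m U^t*) 0 j) h.
  by rewrite /= -row_mul UU mul0mx !mxE eqxx => /eqP; rewrite oner_eq0.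
- move=> a; rewrite eigC => /eigenvalueP [v vS vn0].
  set w := v *m U^t*.
  have wD : w *m diag_mx D = toC a *: w.
    rewrite /w -[_ *m diag_mx D]mulmx1 -UU !mulmxA.
    by rewrite -(mulmxA v) -(mulmxA v) -SE vS scalemxAl.
  have wn0 : w != 0.
    apply: contraNneq vn0 => w0.
    by rewrite -[v]mulmx1 -UtU mulmxA -/w w0 mul0mx.
  have [j wj] : exists j, w 0 j != 0.
    case: (pickP (fun j => w 0 j != 0)) => [j hj|h]; first by exists j.
    case/negP: wn0; apply/eqP/rowP => k; rewrite [RHS]mxE; apply/eqP.
    exact/negbFE/h.
  exists j; move/rowP: wD => /(_ j); rewrite mul_mx_diag mxE [X in _ = X]mxE.
  rewrite mulrC => h0; have h := mulIf wj h0.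
  by have := congr1 (@complex.Re R) h; rewrite /=.
- move=> l x hl.
  rewrite -(@lecR R).
  set xr := (map_mx toC x)^T.
  have xrc : xr^t* = xr^T.
    by apply/matrixP => i k; rewrite !mxE conj_Creal // toC_real.
  have E1 : toC ((x^T *m x) 0 0) = (xr *m xr^t*) 0 0.
    have M1 : map_mx toC (x^T *m x) = xr *m xr^t*.
      by rewrite xrc trmxK map_mxM -map_trmx.
    by rewrite -M1 [RHS]mxE.
  have E2 : toC ((x^T *m S *m x) 0 0) = (xr *m Sc *m xr^t*) 0 0.
    have M1 : map_mx toC (x^T *m S *m x) = xr *m Sc *m xr^t*.
      by rewrite xrc trmxK !map_mxM -map_trmx.
    by rewrite -M1 [RHS]mxE.
  set w := xr *m U^t*.
  have Ew : w^t* = U *m xr^t* by rewrite /w trmx_mul map_mxM trmxCK.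
  have E1' : (xr *m xr^t*) = w *m w^t*.
    by rewrite Ew /w mulmxA -(mulmxA xr) UtU mulmx1.
  have E2' : (xr *m Sc *m xr^t*) = w *m diag_mx D *m w^t*.
    by rewrite Ew SE /w !mulmxA.
  rewrite rmorphM /= E1 E2 E1' E2' !mxE mulr_sumr.
  apply: ler_sum => j _.
  have zt : 0 <= w 0 j * (w^t*) j 0.
    by rewrite [(w^t*) j 0]mxE [_^T _ _]mxE; exact: mul_conjC_ge0.
  rewrite mul_mx_diag [X in _ <= X * _]mxE [w 0 j * D 0 j]mulrC -mulrA.
  apply: ler_wpM2r => //.
  by rewrite DR lecR; exact: hl.
Qed.
End Spec.

Section H.
Variable R : realType.

Definition sqn q (x : 'cV[R]_q) : R := \sum_i x i 0 ^+ 2.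

Lemma sqn_ge0 q (x : 'cV[R]_q) : 0 <= sqn x.
Proof. by apply: sumr_ge0 => i _; exact: sqr_ge0. Qed.

Lemma sqnE q (x : 'cV[R]_q) : sqn x = (x^T *m x) 0 0.
Proof. by rewrite mxE; apply: eq_bigr => i _; rewrite mxE expr2. Qed.

Lemma vnorm2E q (x : 'cV[R]_q) : vnorm2 x = Num.sqrt (sqn x).
Proof. by []. Qed.

Lemma vnorm2_ge0 q (x : 'cV[R]_q) : 0 <= vnorm2 x.
Proof. exact: sqrtr_ge0. Qed.

Lemma sqr_vnorm2 q (x : 'cV[R]_q) : vnorm2 x ^+ 2 = sqn x.
Proof. by rewrite vnorm2E sqr_sqrtr // sqn_ge0. Qed.

Lemma le_sum_term (I : finType) (F : I -> R) j :
  (forall i, 0 <= F i) -> F j <= \sum_i F i.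
Proof.
move=> h; rewrite (bigD1 j) //= lerDl; apply: sumr_ge0 => i _; exact: h.
Qed.

Lemma sqn_scale q c (x : 'cV[R]_q) : sqn (c *: x) = c ^+ 2 * sqn x.
Proof. by rewrite /sqn mulr_sumr; apply: eq_bigr => i _; rewrite mxE exprMn. Qed.

Lemma vnorm2_scale q c (x : 'cV[R]_q) : vnorm2 (c *: x) = `|c| * vnorm2 x.
Proof. by rewrite !vnorm2E sqn_scale sqrtrM ?sqr_ge0 // sqrtr_sqr. Qed.

Lemma sqn_lin q (a b : R) (y z : 'cV[R]_q) :
  sqn (a *: y - b *: z) = a ^+ 2 * sqn y - 2 * a * b * (y^T *m z) 0 0 + b ^+ 2 * sqn z.
Proof.
have -> : (y^T *m z) 0 0 = \sum_i y i 0 * z i 0.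
  by rewrite mxE; apply: eq_bigr => i _; rewrite mxE.
rewrite /sqn !mulr_sumr -sumrB -big_split /=; apply: eq_bigr => i _.
rewrite !mxE; ring.
Qed.

Lemma sqn0 q (x : 'cV[R]_q) : sqn x = 0 -> x = 0.
Proof.
move=> h; apply/matrixP => i j; rewrite ord1 mxE.
have h0 : forall k, (fun k => x k 0 ^+ 2) k = 0.
  by move=> k; apply: (psumr_eq0P _ h) => // l _; exact: sqr_ge0.
by have /eqP := h0 i; rewrite sqrf_eq0 => /eqP.
Qed.

Lemma has_ub_opnorm p q (M : 'M[R]_(p, q)) :
  has_ubound [set vnorm2 (M *m x) | x in [set x : 'cV[R]_q | vnorm2 x = 1]].
Proof.
set K := \sum_i \sum_j `|M i j|.
exists (Num.sqrt (K ^+ 2 *+ p)) => _ [x /= hx <-].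
have sx : sqn x = 1 by rewrite -sqr_vnorm2 hx expr1n.
have xj j : `|x j 0| <= 1.
  rewrite -(ler_pXn2r (n := 2)) ?nnegrE ?normr_ge0 // expr1n real_normK ?num_real //.
  by rewrite -sx; apply: (le_sum_term (F := fun j => x j 0 ^+ 2)) => i; exact: sqr_ge0.
rewrite vnorm2E; apply: ler_wsqrtr.
rewrite -[p in _ *+ p]card_ord -sumr_const; apply: ler_sum => i _.
have K0 : 0 <= K by apply: sumr_ge0 => ? _; apply: sumr_ge0 => ? _.
have hi : `|(M *m x) i 0| <= K.
  rewrite mxE; apply: (le_trans (ler_norm_sum _ _ _)).
  apply: (@le_trans _ _ (\sum_j `|M i j|)).
    apply: ler_sum => j _; rewrite normrM.
    by rewrite -[X in _ <= X]mulr1; apply: ler_wpM2l => //.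
  by apply: (le_sum_term (F := fun i => \sum_j `|M i j|)) => k; apply: sumr_ge0.
by rewrite -real_normK ?num_real // ler_pXn2r ?nnegrE ?normr_ge0.
Qed.

Lemma opnorm_le p q (M : 'M[R]_(p, q)) (x : 'cV[R]_q) :
  vnorm2 (M *m x) <= opnorm2 M * vnorm2 x.
Proof.
have [/sqn0 ->|nz] := eqVneq (sqn x) 0.
  by rewrite mulmx0 !vnorm2E /sqn !big1 ?sqrtr0 ?mulr0 // => i _; rewrite mxE expr0n.
have v0 : 0 < vnorm2 x.
  by rewrite vnorm2E sqrtr_gt0 lt_def nz sqn_ge0.
have n0 : 0 <= (vnorm2 x)^-1 by rewrite invr_ge0 ltW.
set y := (vnorm2 x)^-1 *: x.
have y1 : vnorm2 y = 1.
  by rewrite vnorm2_scale ger0_norm // mulVf // gt_eqF.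
have : vnorm2 (M *m y) <= opnorm2 M.
  by apply: (ub_le_sup (has_ub_opnorm M)); exists y.
rewrite /y -scalemxAr vnorm2_scale ger0_norm //.
move=> h; have := ler_wpM2l (ltW v0) h.
by rewrite mulrA mulfV ?gt_eqF // mul1r mulrC.
Qed.

Lemma opnorm_ub p q (M : 'M[R]_(p, q)) B : 0 <= B ->
  (forall x, vnorm2 x = 1 -> vnorm2 (M *m x) <= B) -> 0 <= opnorm2 M <= B.
Proof.
move=> B0 h; rewrite /opnorm2.
set E := [set _ | _ in _].
have [[e Ee]|E0] := pselect (E !=set0); last first.
  have -> : E = set0 by apply/seteqP; split => [e Ee|e //]; apply: E0; exists e.
  by rewrite sup0 lexx B0.
have hub : ubound E B by move=> _ [x /= hx <-]; exact: h.
apply/andP; split; last exact: (ge_sup (ex_intro _ e Ee) hub).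
apply: (le_trans _ (ub_le_sup (ex_intro _ B hub) Ee)).
by case: Ee => x _ <-; exact: vnorm2_ge0.
Qed.

Lemma sup_fin (T : finType) (f : T -> R) t : f t <= sup [set f t | t in [set: T]].
Proof.
apply: ub_le_sup; last by exists t.
exists (\sum_t `|f t|) => _ [u _ <-].
apply: (le_trans (ler_norm _)).
by apply: (le_sum_term (F := fun t => `|f t|)) => i.
Qed.

Lemma inf_fin (T : finType) (f : T -> R) t : inf [set f t | t in [set: T]] <= f t.
Proof.
apply: ge_inf; last by exists t.
exists (- \sum_t `|f t|) => _ [u _ <-].
rewrite lerNl; apply: (le_trans _ (le_sum_term (F:=fun t => `|f t|) u (fun i => normr_ge0 _))).
by rewrite /= -normrN; exact: ler_norm.
Qed.

Lemma sup_fin_le (T : finType) (f : T -> R) B : 0 <= B ->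
  (forall t, 0 <= f t <= B) -> 0 <= sup [set f t | t in [set: T]] <= B.
Proof.
move=> B0 h.
case: (pselect (exists t : T, True)) => [[t _]|T0]; last first.
  have -> : [set f t | t in [set: T]] = set0.
    by apply/seteqP; split => [e [t _ _]|e //]; apply: T0; exists t.
  by rewrite sup0 lexx B0.
apply/andP; split.
  by apply: le_trans (sup_fin f t); case/andP: (h t).
by apply: ge_sup; [exists (f t), t | move=> _ [u _ <-]; case/andP: (h u)].
Qed.

Lemma jsr_le (m : nat) (T : finType) (A : T -> 'M[R]_m) (s : R) : 0 <= s ->
  (forall k, (0 < k)%N ->
     powR (sup [set opnorm2 (prodA A (fgraph f)) | f in [set: {ffun 'I_k -> T}]])
         (k%:R^-1) <= s) -> jsr A <= s.
Proof.
move=> s0 h; rewrite /jsr.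
set u := (fun k : nat => _).
case: (pselect (cvg (u @ \oo))) => [cu|ncu].
  apply: limr_le => //; exists 1%N => // k /= k1; exact: h.
case: (eqVneq (lim (u @ \oo)) point) => [->|/cvgNpoint //]; by [].
Qed.

Lemma prodA_le (m : nat) (T : Type) (A : T -> 'M[R]_m) r : 0 <= r ->
  (forall t y, vnorm2 (A t *m y) <= r * vnorm2 y) ->
  forall s x, vnorm2 (prodA A s *m x) <= r ^+ size s * vnorm2 x.
Proof.
move=> r0 hA.
suff H : forall s (B : 'M[R]_m) (x : 'cV[R]_m), vnorm2 (foldl (fun B pi => A pi *m B) B s *m x)
                       <= r ^+ size s * vnorm2 (B *m x).
  by move=> s x; have := H s 1%:M x; rewrite mul1mx.
elim=> [|p s IH] B x /=; first by rewrite expr0 mul1r.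
apply: le_trans (IH _ x) _.
rewrite exprS -mulmxA [r * _]mulrC -mulrA.
by apply: ler_wpM2l; [exact: exprn_ge0 | exact: hA].
Qed.

Lemma powR_step (a r : R) (k : nat) : (0 < k)%N -> 0 <= r -> 0 <= a <= r ^+ k ->
  powR a (k%:R^-1) <= r.
Proof.
move=> k0 r0 /andP[a0 ar].
apply: (le_trans (ge0_ler_powR _ _ _ ar)) => //; rewrite ?invr_ge0 ?ler0n ?nnegrE ?exprn_ge0 //.
rewrite -powR_mulrn // -powRrM mulfV ?powRr1 //.
by rewrite pnatr_eq0 -lt0n.
Qed.

Lemma jsr_bound (m : nat) (T : finType) (A : T -> 'M[R]_m) r : 0 <= r ->
  (forall t y, vnorm2 (A t *m y) <= r * vnorm2 y) -> jsr A <= r.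
Proof.
move=> r0 hA; apply: jsr_le => // k k0.
apply: powR_step => //.
apply: sup_fin_le; first exact: exprn_ge0.
move=> f; apply: opnorm_ub; first exact: exprn_ge0.
move=> x x1; have := prodA_le r0 hA (fgraph f) x.
by rewrite x1 mulr1 size_tuple [in X in _ <= X -> _]card_ord.
Qed.

Lemma lambda_min_le m (S : 'M[R]_m) : S^T = S ->
  forall x, lambda_min S * sqn x <= (x^T *m S *m x) 0 0.
Proof.
move=> Ss x; have [d [d1 d2 d3]] := spectral_real Ss.
rewrite sqnE; apply: d3 => j; rewrite /lambda_min; apply: ge_inf; last exact: d1.
exists (- \sum_j `|d j|) => a /d2 [i ->].
rewrite lerNl; apply: (le_trans _ (le_sum_term (F:=fun t => `|d t|) i (fun i => normr_ge0 _))).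
by rewrite /= -normrN; exact: ler_norm.
Qed.

Lemma sym_quad m (M : 'M[R]_m) (y : 'cV[R]_m) :
  (y^T *m (2^-1 *: (M + M^T)) *m y) 0 0 = (y^T *m M *m y) 0 0.
Proof.
have T1 : y^T *m M^T *m y = (y^T *m M *m y)^T by rewrite !trmx_mul trmxK mulmxA.
rewrite -scalemxAr -scalemxAl mxE mulmxDr mulmxDl mxE T1 [(_^T) 0 0]mxE.
by field.
Qed.

Lemma Aeta_step nS nA m (Phi : 'M[R]_(nS * nA, m)) d P gamma alpha eta
  (pi : policy nS nA) c L (y : 'cV[R]_m) :
  let M := Mpi Phi d P gamma pi in
  0 <= alpha -> 0 <= 1 - alpha * eta ->
  c <= lambda_min (2^-1 *: (M + M^T)) -> opnorm2 M <= L ->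
  sqn (Aeta Phi d P gamma alpha eta pi *m y) <=
   ((1 - alpha * eta) ^+ 2 - 2 * alpha * (1 - alpha * eta) * c + alpha ^+ 2 * L ^+ 2) * sqn y.
Proof.
move=> M a0 b0 hc hL.
have AE : Aeta Phi d P gamma alpha eta pi *m y = (1 - alpha * eta) *: y - alpha *: (M *m y).
  rewrite /Aeta mulmxBl mul1mx -scalemxAl mulmxDl mul_scalar_mx -/M.
  rewrite scalerDr scalerA scalerBl scale1r opprD addrA.
  by rewrite addrAC.
rewrite AE sqn_lin.
have Ssym : (2^-1 *: (M + M^T))^T = 2^-1 *: (M + M^T).
  by rewrite linearZ /= linearD /= trmxK addrC.
have ray : c * sqn y <= (y^T *m (M *m y)) 0 0.
  rewrite mulmxA -sym_quad; apply: le_trans (lambda_min_le Ssym y).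
  by apply: ler_wpM2r => //; exact: sqn_ge0.
have nm : sqn (M *m y) <= L ^+ 2 * sqn y.
  have h : vnorm2 (M *m y) <= L * vnorm2 y.
    by apply: le_trans (opnorm_le M y) _; apply: ler_wpM2r => //; exact: vnorm2_ge0.
  rewrite -!sqr_vnorm2 -exprMn ler_pXn2r // nnegrE ?vnorm2_ge0 //.
  exact: le_trans (vnorm2_ge0 _) h.
have s0 := sqn_ge0 y.
have h1 : 2 * alpha * (1 - alpha * eta) * (c * sqn y) <= 2 * alpha * (1 - alpha * eta) * (y^T *m (M *m y)) 0 0.
  by apply: ler_wpM2l => //; rewrite !mulr_ge0.
have h2 : alpha ^+ 2 * sqn (M *m y) <= alpha ^+ 2 * (L ^+ 2 * sqn y).
  by apply: ler_wpM2l => //; exact: sqr_ge0.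
lra.
Qed.

End H.

Theorem proposition6 (R : realType) (nS nA m : nat)
  (P : 'M[R]_(nS * nA, nS)) (Phi : 'M[R]_(nS * nA, m)) (d : 'cV[R]_(nS * nA))
  (gamma alpha eta : R) :
  (0 < nS)%N -> (0 < nA)%N ->
  (forall i j, 0 <= P i j) -> (forall i, \sum_j P i j = 1) ->
  \rank Phi = m ->
  (forall i, 0 < d i 0) -> \sum_i d i 0 = 1 ->
  0 < gamma < 1 -> 0 < alpha < 1 -> 0 <= eta ->
  0 <= alpha * eta <= 1 ->
  let c := c_Phi Phi d P gamma in
  let L := L_Phi Phi d P gamma in
  let rho := rho_dir Phi d P gamma alpha eta in
  [/\ rho <= Num.sqrt ((1 - alpha * eta) ^+ 2 - 2 * alpha * (1 - alpha * eta) * c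
                       + alpha ^+ 2 * L ^+ 2),
      rho <= Num.sqrt (1 - 2 * alpha * (c + eta)
                       + alpha ^+ 2 * (L ^+ 2 + 2 * c * eta + eta ^+ 2))
    & (0 < c + eta -> alpha < 2 * (c + eta) / (L ^+ 2 + 2 * c * eta + eta ^+ 2) ->
       rho < 1)].
Proof.
move=> _ _ _ _ _ _ _ _ /andP[a0 a1] eta0 /andP[ae0 ae1] c L rho.
set b := (1 - alpha * eta) ^+ 2 - 2 * alpha * (1 - alpha * eta) * c + alpha ^+ 2 * L ^+ 2.
have bE : b = 1 - 2 * alpha * (c + eta) + alpha ^+ 2 * (L ^+ 2 + 2 * c * eta + eta ^+ 2).
  by rewrite /b; ring.
have rb : rho <= Num.sqrt b.
  rewrite /rho /rho_dir; apply: jsr_bound; first exact: sqrtr_ge0.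
  move=> pi y.
  have ae1' : 0 <= 1 - alpha * eta by rewrite subr_ge0.
  have hs := Aeta_step (c:=c) (L:=L) y (ltW a0) ae1'
    (inf_fin (fun pi => lambda_min (2^-1 *: (Mpi Phi d P gamma pi + (Mpi Phi d P gamma pi)^T))) pi)
    (sup_fin (fun pi => opnorm2 (Mpi Phi d P gamma pi)) pi).
  rewrite !vnorm2E; apply: le_trans (ler_wsqrtr hs) _.
  by rewrite mulrC sqrtrM ?sqn_ge0 // mulrC.
split => //; first by rewrite -bE.
move=> cpos hal; apply: le_lt_trans rb _.
have b1 : b < 1.
  rewrite bE; set Q := L ^+ 2 + 2 * c * eta + eta ^+ 2 in hal *.
  case: (ltrP 0 Q) => hQ.
    rewrite ltr_pdivlMr // in hal.
    have h : alpha * (alpha * Q) < alpha * (2 * (c + eta)) by rewrite ltr_pM2l.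
    have -> : alpha ^+ 2 * Q = alpha * (alpha * Q) by ring.
    lra.
  have : 2 * (c + eta) / Q <= 0.
    by apply: mulr_ge0_le0; [lra | rewrite invr_le0].
  lra.
have [b0|b0] := lerP b 0; first by rewrite ler0_sqrtr.
by rewrite -sqrtr1 ltr_sqrt.
Qed.
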